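(* Let $k_u(n)$ be the largest $k$ such that Maker has a strategy in the $k$-tournament-type game on $K_n$ guaranteeing that, at the end of the game, her digraph contains a copy of every tournament on $k$ vertices. Then $k_u(n)\le(1+o(1))\log_2 n$ as $n\to\infty$.
   Context: The game: Maker (moving first) and Breaker alternately claim one unclaimed edge of $K_n$, and each chooses an orientation for the claimed edge; the game ends when all edges are claimed. A tournament is a digraph with exactly one directed edge between each pair of distinct vertices. *)

(* Defs.v *)
From mathcomp Require Import all_boot.
Set Implicit Arguments. Unset Strict Implicit. Unset Printing Implicit Defensive.

(* A move: an ordered pair (u,v) of vertices of K_n = claiming the edge {u,v}
   and orienting it u -> v. *)
Definition arc (n : nat) := ('I_n * 'I_n)%type.

Definition claimed n (h : seq (arc n)) (u v : 'I_n) : bool :=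
  ((u, v) \in h) || ((v, u) \in h).

Definition legal n (h : seq (arc n)) (m : arc n) : bool :=
  (m.1 != m.2) && ~~ claimed h m.1 m.2.

(* Maker moves first, so her arcs are those at even positions of the history *)
Definition maker_arcs n (h : seq (arc n)) : seq (arc n) :=
  mask [seq ~~ odd i | i <- iota 0 (size h)] h.

Definition maker_digraph n (h : seq (arc n)) : rel 'I_n :=
  fun u v => (u, v) \in maker_arcs h.

Definition is_tournament k (T : rel 'I_k) : Prop :=
  (forall i, ~~ T i i) /\ (forall i j, i != j -> T i j = ~~ T j i).

Definition contains_copy n (D : rel 'I_n) k (T : rel 'I_k) : Prop :=
  exists f : 'I_k -> 'I_n, injective f /\ (forall i j, T i j -> D (f i) (f j)).

Definition universal_win n k (h : seq (arc n)) : Prop :=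
  forall T : rel 'I_k, is_tournament T -> contains_copy (maker_digraph h) T.

Fixpoint maker_forces n k (f : nat) (h : seq (arc n)) : Prop :=
  match f with
  | 0 => universal_win k h
  | f'.+1 =>
      if ~~ odd (size h)
      then exists m, legal h m /\ maker_forces k f' (rcons h m)
      else forall m, legal h m -> maker_forces k f' (rcons h m)
  end.

Definition maker_wins (n k : nat) : Prop := @maker_forces n k 'C(n, 2) [::].

(* Main.v *)
Require Import Defs.
From mathcomp Require Import all_boot zify.
Import Defs.
Set Implicit Arguments. Unset Strict Implicit. Unset Printing Implicit Defensive.

Definition pairs k : {set 'I_k * 'I_k} := [set p : 'I_k * 'I_k | p.1 < p.2].

Lemma card_pairs k : #|pairs k| * 2 + k = k * k.
Proof.
set L := pairs k.
set G := [set p : 'I_k * 'I_k | p.2 < p.1].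
set D := [set (i, i) | i : 'I_k].
have cG : #|G| = #|L|.
  have -> : G = [set (p.2, p.1) | p in L].
    apply/setP => -[x y]; rewrite !inE /=; apply/idP/imsetP.
      by move=> H; exists (y, x); rewrite ?inE.
    by case=> -[a b]; rewrite inE /= => H [-> ->].
  by apply: card_imset => -[a b] [c d] /= [-> ->].
have cD : #|D| = k by rewrite card_imset ?card_ord // => a b [].
have U : L :|: G :|: D = setT.
  apply/setP => -[x y]; rewrite !inE /=.
  case: (ltngtP x y) => //= e.
  by apply/imsetP; exists x => //; rewrite (val_inj e).
have I1 : L :&: G = set0.
  by apply/setP => -[x y]; rewrite !inE /=; case: (ltngtP x y).
have I2 : (L :|: G) :&: D = set0.
  apply/setP => -[x y]; rewrite !inE /=; apply/negP => /andP[H /imsetP [z _ [e1 e2]]].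
  by move: H; rewrite e1 e2 ltnn.
have := cardsUI L G; rewrite I1 cards0 addn0 => e1.
have := cardsUI (L :|: G) D; rewrite I2 cards0 addn0 U cardsT card_prod card_ord e1 cG cD.
lia.
Qed.

Lemma bin2_mul n : 'C(n, 2) * 2 + n = n * n.
Proof. elim: n => // n IH. rewrite binS bin1. lia. Qed.

Lemma card_pairs_bin n : #|pairs n| = 'C(n, 2).
Proof. have := card_pairs n; have := bin2_mul n; lia. Qed.

Lemma maker_rcons n (h : seq (arc n)) m :
  maker_arcs (rcons h m) = if odd (size h) then maker_arcs h else rcons (maker_arcs h) m.
Proof.
rewrite /maker_arcs size_rcons -addn1 iotaD map_cat -cats1 mask_cat ?size_map ?size_iota //=.
by case: (odd (size h)) => /=; rewrite ?cats0 ?cats1.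
Qed.

Definition makerE n (h : seq (arc n)) (u v : 'I_n) : bool :=
  ((u, v) \in maker_arcs h) || ((v, u) \in maker_arcs h).
Definition cw n (h : seq (arc n)) u v : nat :=
  if makerE h u v then 2 else if claimed h u v then 0 else 1.
Definition mt n (a b u v : 'I_n) : bool := ((u == a) && (v == b)) || ((u == b) && (v == a)).

Lemma cw_maker n (h : seq (arc n)) a b u v : legal h (a, b) -> ~~ odd (size h) ->
  cw (rcons h (a, b)) u v = if mt a b u v then 2 else cw h u v.
Proof.
rewrite /legal /= => /andP[ab ncl] ev.
rewrite /cw /makerE /claimed /mt maker_rcons (negbTE ev) !mem_rcons !in_cons.
rewrite !xpair_eqE; case H: ((u == a) && (v == b) || (u == b) && (v == a)).
  by case/orP: H => /andP [e1 e2]; rewrite e1 e2 ?orbT.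
move/norP: H => [H1 H2].
by rewrite (negbTE H1) [(v == a) && _]andbC (negbTE H2).
Qed.

Lemma maker_sub n (h : seq (arc n)) x : x \in maker_arcs h -> x \in h.
Proof. exact: mem_mask. Qed.

Lemma cw_breaker n (h : seq (arc n)) a b u v : legal h (a, b) -> odd (size h) ->
  cw (rcons h (a, b)) u v = if mt a b u v then 0 else cw h u v.
Proof.
rewrite /legal /claimed /= => /andP[ab /norP [nab nba]] od.
rewrite /cw /makerE /claimed /mt maker_rcons od !mem_rcons !in_cons.
rewrite !xpair_eqE; case H: ((u == a) && (v == b) || (u == b) && (v == a)).
  case/orP: H => /andP [/eqP e1 /eqP e2]; subst.
    by rewrite !eqxx /= ifN // negb_or; apply/andP; split; apply/negP => /maker_sub; apply/negP.
  by rewrite !eqxx /= orbT ifN // negb_or; apply/andP; split; apply/negP => /maker_sub; apply/negP.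
move/norP: H => [H1 H2].
by rewrite (negbTE H1) [(v == a) && _]andbC (negbTE H2).
Qed.

Lemma cw_nil n (u v : 'I_n) : cw [::] u v = 1.
Proof. by []. Qed.

Definition hits n k (g : {ffun 'I_k -> 'I_n}) (a b : 'I_n) : bool :=
  [exists p in pairs k, mt a b (g p.1) (g p.2)].

Lemma mt_uniq n k (g : {ffun 'I_k -> 'I_n}) a b p p0 : injective g ->
  p \in pairs k -> p0 \in pairs k -> mt a b (g p.1) (g p.2) -> mt a b (g p0.1) (g p0.2) -> p = p0.
Proof.
move=> ig; rewrite !inE /mt; case: p => x y; case: p0 => x0 y0 /= l l0.
case/orP=> /andP[/eqP e1 /eqP e2]; case/orP=> /andP[/eqP e3 /eqP e4].
- by rewrite (ig x x0 (etrans e1 (esym e3))) (ig y y0 (etrans e2 (esym e4))).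
- have h1 := ig x y0 (etrans e1 (esym e4)). have h2 := ig y x0 (etrans e2 (esym e3)).
  by move: l0; rewrite -h1 -h2 ltnNge (ltnW l).
- have h1 := ig x y0 (etrans e1 (esym e4)). have h2 := ig y x0 (etrans e2 (esym e3)).
  by move: l0; rewrite -h1 -h2 ltnNge (ltnW l).
- by rewrite (ig x x0 (etrans e1 (esym e3))) (ig y y0 (etrans e2 (esym e4))).
Qed.

Lemma prod_update n k (g : {ffun 'I_k -> 'I_n}) (F F' : 'I_n -> 'I_n -> nat) a b c0 :
  injective g -> (forall u v, F' u v = if mt a b u v then c0 else F u v) ->
  (forall u v, mt a b u v -> F u v = 1) ->
  \prod_(p in pairs k) F' (g p.1) (g p.2) =
  if hits g a b then c0 * \prod_(p in pairs k) F (g p.1) (g p.2)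
  else \prod_(p in pairs k) F (g p.1) (g p.2).
Proof.
move=> ig eF F1; rewrite /hits; case: existsP.
  case=> p0 /andP [p0P m0].
  rewrite (bigD1 p0) //= [in RHS](bigD1 p0) //= eF m0 F1 // mul1n; congr (_ * _).
  apply: eq_bigr => p /andP [pP ne]; rewrite eF; case: ifP => // m.
  by rewrite (mt_uniq ig pP p0P m m0) eqxx in ne.
move=> nh; apply: eq_bigr => p pP; rewrite eF; case: ifP => // m.
by case: nh; exists p; rewrite pP m.
Qed.

Definition weight n k (h : seq (arc n)) (g : {ffun 'I_k -> 'I_n}) : nat :=
  \prod_(p in pairs k) cw h (g p.1) (g p.2).
Definition Phi n k (h : seq (arc n)) : nat :=
  \sum_(g : {ffun 'I_k -> 'I_n} | injectiveb g) weight h g.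
Definition wt n k (h : seq (arc n)) (a b : 'I_n) : nat :=
  \sum_(g : {ffun 'I_k -> 'I_n} | injectiveb g && hits g a b) weight h g.

Lemma cw1 n (h : seq (arc n)) a b u v : legal h (a, b) -> mt a b u v -> cw h u v = 1.
Proof.
rewrite /legal /claimed /= => /andP[_ /norP[n1 n2]] /orP[]/andP[/eqP -> /eqP ->];
rewrite /cw /makerE /claimed ?(negbTE n1) ?(negbTE n2) /=.
- by rewrite ifN // negb_or; apply/andP; split; apply/negP => /maker_sub; apply/negP.
- by rewrite ifN // negb_or; apply/andP; split; apply/negP => /maker_sub; apply/negP.
Qed.

Lemma Phi_maker n k (h : seq (arc n)) a b : legal h (a, b) -> ~~ odd (size h) ->
  Phi k (rcons h (a, b)) = Phi k h + wt k h a b.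
Proof.
move=> lg ev; rewrite /Phi /wt big_mkcondr -big_split /=.
apply: eq_bigr => g /injectiveP ig; rewrite /weight.
rewrite (prod_update (F := cw h) (F' := cw (rcons h (a, b))) (a := a) (b := b) (c0 := 2) ig) => [|u v|u v]; last first.
- exact: cw1.
- exact: cw_maker.
by case: ifP; rewrite ?addn0 // mul2n -addnn.
Qed.

Lemma Phi_breaker n k (h : seq (arc n)) a b : legal h (a, b) -> odd (size h) ->
  Phi k (rcons h (a, b)) + wt k h a b = Phi k h.
Proof.
move=> lg od; rewrite /Phi /wt big_mkcondr -big_split /=.
apply: eq_bigr => g /injectiveP ig; rewrite /weight.
rewrite (prod_update (F := cw h) (F' := cw (rcons h (a, b))) (a := a) (b := b) (c0 := 0) ig) => [|u v|u v]; last first.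
- exact: cw1.
- exact: cw_breaker.
by case: ifP; rewrite ?addn0.
Qed.

Lemma wt_breaker n k (h : seq (arc n)) a b x y : legal h (a, b) -> odd (size h) ->
  wt k (rcons h (a, b)) x y <= wt k h x y.
Proof.
move=> lg od; rewrite /wt; apply: leq_sum => g /andP[/injectiveP ig _]; rewrite /weight.
rewrite (prod_update (F := cw h) (F' := cw (rcons h (a, b))) (a := a) (b := b) (c0 := 0) ig) => [|u v|u v]; last first.
- exact: cw1.
- exact: cw_breaker.
by case: ifP.
Qed.

Lemma wt_Phi n k (h : seq (arc n)) a b : wt k h a b <= Phi k h.
Proof.
rewrite /wt /Phi big_mkcondr; apply: leq_sum => g _; by case: ifP.
Qed.

Lemma Phi_nil n k : Phi k (Nil (arc n)) <= n ^ k.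
Proof.
rewrite /Phi.
apply: (@leq_trans (\sum_(g : {ffun 'I_k -> 'I_n}) 1)).
  rewrite big_mkcond; apply: leq_sum => g _; case: ifP => // _.
  by rewrite /weight big1.
by rewrite sum1_card card_ffun !card_ord.
Qed.

Definition normp n (x : arc n) : arc n := if x.1 < x.2 then x else (x.2, x.1).

Lemma exists_legal n (h : seq (arc n)) : size h < 'C(n, 2) -> exists m, legal h m.
Proof.
move=> lt; case: (pickP (fun m => legal h m)) => [m lm|nl]; first by exists m.
exfalso.
have sub : pairs n \subset [set normp x | x in h].
  apply/subsetP => -[u v]; rewrite inE /= => uv.
  have := nl (u, v); rewrite /legal /= neq_ltn uv /= => /negbFE /orP[] H; apply/imsetP.
    by exists (u, v) => //; rewrite /normp /= uv.
  by exists (v, u) => //; rewrite /normp /= ltnNge (ltnW uv).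
have := subset_leq_card sub; rewrite card_pairs_bin => H.
have := leq_trans H (leq_trans (leq_imset_card _ _) (card_size h)).
by rewrite leqNgt lt.
Qed.

Definition nice n (h : seq (arc n)) := forall u v, (u, v) \in h -> (v, u) \in h -> False.

Lemma nice_rcons n (h : seq (arc n)) m : nice h -> legal h m -> nice (rcons h m).
Proof.
case: m => a b nh; rewrite /legal /claimed /= => /andP[ab /norP[n1 n2]] u v.
rewrite !mem_rcons !in_cons !xpair_eqE.
case/orP => [/andP[/eqP e1 /eqP e2]|H1]; case/orP => [/andP[/eqP e3 /eqP e4]|H2].
- by subst; rewrite eqxx in ab.
- by subst; rewrite H2 in n2.
- by subst; rewrite H1 in n2.
- exact: nh H1 H2.
Qed.

Lemma final n k (h : seq (arc n)) : universal_win k h -> nice h ->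
  2 ^ #|pairs k| * 2 ^ #|pairs k| <= Phi k h.
Proof.
move=> uw nh.
pose full (g : {ffun 'I_k -> 'I_n}) := [forall p in pairs k, makerE h (g p.1) (g p.2)].
pose Full := [set g : {ffun 'I_k -> 'I_n} | injectiveb g && full g].
pose Sof (g : {ffun 'I_k -> 'I_n}) := [set p in pairs k | (g p.1, g p.2) \in maker_arcs h].
have cF : 2 ^ #|pairs k| <= #|Full|.
  rewrite -card_powerset; apply: leq_trans (leq_imset_card Sof Full).
  apply: subset_leq_card; apply/subsetP => S; rewrite inE => /subsetP SP.
  pose T : rel 'I_k := fun i j => if i < j then (i, j) \in S else if j < i then (j, i) \notin S else false.
  have tT : is_tournament T.
    split=> [i|i j]; first by rewrite /T ltnn.
    by rewrite /T neq_ltn; case: (ltngtP i j) => // _ _; rewrite ?negbK.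
  have [f [fi fT]] := uw T tT.
  pose g := [ffun i => f i].
  have gE : forall i, g i = f i by move=> i; rewrite ffunE.
  have key : forall p, p \in pairs k -> if p \in S then (g p.1, g p.2) \in maker_arcs h
                                       else (g p.2, g p.1) \in maker_arcs h.
    move=> [x y]; rewrite inE /= => xy; rewrite !gE; case: ifP => xS.
      by apply: fT; rewrite /T xy.
    by apply: fT; rewrite /T ltnNge (ltnW xy) xy xS.
  apply/imsetP; exists g.
    rewrite inE; apply/andP; split.
      by apply/injectiveP => x y; rewrite !gE; apply: fi.
    apply/forallP => p; apply/implyP => pP; have := key p pP; rewrite /makerE.
    by case: ifP => _ ->; rewrite ?orbT.
  apply/setP => p; rewrite /Sof inE.
  case pP: (p \in pairs k) => /=; last by apply/negP => /SP; rewrite pP.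
  have := key p pP; case: (p \in S) => H; first by rewrite H.
  apply/esym/negP => H2; exact: (nh (g p.2) (g p.1)) (maker_sub H) (maker_sub H2).
rewrite /Phi (bigID full) /=.
apply: leq_trans (leq_addr _ _).
have -> : \sum_(g : {ffun 'I_k -> 'I_n} | injectiveb g && full g) weight h g =
          \sum_(g in Full) 2 ^ #|pairs k|.
  apply: eq_big => [g|g]; first by rewrite inE.
  move=> /andP[_ /forallP fg]; rewrite /weight -prod_nat_const.
  apply: eq_bigr => p pP; have := implyP (fg p) pP; by rewrite /cw => ->.
by rewrite sum_nat_const leq_mul2r cF orbT.
Qed.

Definition Inv n k (h : seq (arc n)) := exists s, Phi k h + s <= 2 * Phi k (Nil (arc n)) /\
  (~~ odd (size h) -> forall e, legal h e -> wt k h e.1 e.2 <= s).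

Lemma legal_rcons n (h : seq (arc n)) m e : legal (rcons h m) e -> legal h e.
Proof.
rewrite /legal /claimed !mem_rcons !in_cons => /andP[-> /norP[/norP[_ a] /norP[_ b]]].
by rewrite (negbTE a) (negbTE b).
Qed.

Lemma key n k f : forall h : seq (arc n), size h + f = 'C(n, 2) -> nice h -> Inv k h ->
  maker_forces k f h -> 2 ^ #|pairs k| * 2 ^ #|pairs k| <= 2 * Phi k (Nil (arc n)).
Proof.
elim: f => [|f IH] h sz nh [s [Hs He]] /=.
  move=> uw; apply: leq_trans (final uw nh) _; apply: leq_trans Hs; exact: leq_addr.
case: ifP => [ev [[a b] [lm mf]] | od mf].
  apply: (IH (rcons h (a, b))) mf; first by rewrite size_rcons; lia.
    exact: nice_rcons.
  exists 0; split.
    rewrite Phi_maker // addn0; have /= := He ev (a, b) lm; lia.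
  by rewrite size_rcons /= negbK (negbTE ev).
have oddh : odd (size h) by apply: negbFE.
have [m0 l0] : exists m, legal h m by apply: exists_legal; lia.
case: (arg_maxnP (fun m => wt k h m.1 m.2) l0) => [[a b] lb maxb].
apply: (IH (rcons h (a, b))) (mf _ lb); first by rewrite size_rcons; lia.
  exact: nice_rcons.
exists (wt k h a b); split.
  by rewrite Phi_breaker //; apply: leq_trans Hs; exact: leq_addr.
move=> _ [x y] lxy /=; apply: leq_trans (wt_breaker _ _ _ lb oddh) _.
exact: (maxb (x, y) (legal_rcons lxy)).
Qed.

Lemma wins_bound n k : maker_wins n k ->
  2 ^ #|pairs k| * 2 ^ #|pairs k| <= 2 * n ^ k.
Proof.
move=> mw; apply: leq_trans (_ : 2 * Phi k (Nil (arc n)) <= _); last first.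
  by rewrite leq_mul2l Phi_nil orbT.
apply: (key (f := 'C(n, 2)) (h := [::])) => //.
exists (Phi k (Nil (arc n))); split; first by rewrite addnn -mul2n.
by move=> _ e _; apply: wt_Phi.
Qed.

Theorem mainTheorem10 :
  forall p q : nat, 0 < p -> 0 < q ->
  exists N : nat, forall n : nat, N <= n ->
  forall k : nat, maker_wins n k -> 2 ^ (k * q) <= n ^ (q + p).
Proof.
move=> p q p0 q0; exists (4 ^ q) => n Nn k /wins_bound.
have n0 : 0 < n by apply: leq_trans Nn; rewrite expn_gt0.
case: k => [|k]; first by rewrite mul0n expn0 expn_gt0 n0.
have cp := card_pairs k.+1.
have -> : 2 ^ #|pairs k.+1| * 2 ^ #|pairs k.+1| = (2 ^ k) ^ k.+1.
  by rewrite -expnD -expnM; congr (2 ^ _); nia.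
move=> H.
have H2 : (2 ^ k) ^ k.+1 <= (2 * n) ^ k.+1.
  apply: leq_trans H _; rewrite expnMn leq_mul2r; apply/orP; right.
  by rewrite -{1}(expn1 2) leq_pexp2l.
rewrite leq_exp2r // in H2.
have H3 : 2 ^ k.+1 <= 4 * n by rewrite expnS; lia.
rewrite expnM expnD.
apply: leq_trans (_ : (4 * n) ^ q <= _); first by rewrite leq_exp2r.
rewrite expnMn mulnC leq_mul2l; apply/orP; right.
apply: leq_trans Nn _; apply: leq_trans (_ : n ^ 1 <= _); first by rewrite expn1.
by rewrite leq_pexp2l.
Qed.
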